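(* Let $\mathcal{C}=\mathcal{I}_{\beta_1}\oplus\mathcal{I}_{\beta_2}\oplus\dots\oplus\mathcal{I}_{\beta_u}$ be a $\lambda$-constacyclic code of length $n$ over $\mathbb{F}_q$, where $0\le\beta_1<\dots<\beta_u\le s$. Then $$N_{\langle\rho\rangle}(\mathcal{C}^{*})=\sum_{\substack{\{\gamma_1,\dots,\gamma_l\}\subseteq\{1,\dots,u\}\\ l\ge1,\ \gamma_1<\dots<\gamma_l}}\frac{\prod_{i=1}^{l}(q^{d_{\beta_{\gamma_i}}}-1)\cdot\gcd(1+t\alpha_{\beta_{\gamma_1}},\dots,1+t\alpha_{\beta_{\gamma_l}},n)}{tn}.$$ Moreover, the number of distinct nonzero Hamming weights of codewords of $\mathcal{C}$ is at most $N_{\langle\rho\rangle}(\mathcal{C}^{*})$, with equality if and only if for any two nonzero codewords $c_1,c_2\in\mathcal{C}$ of the same Hamming weight there exists an integer $j$ with $\rho^{j}(c_1)=c_2$.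
   Context: Standing setup: $q$ is a prime power, $n$ a positive integer with $\gcd(n,q)=1$, $\lambda\in\mathbb{F}_q^{*}$ has multiplicative order $t$ (so $t\mid q-1$). $\mathcal{R}=\mathbb{F}_q[x]/\langle x^n-\lambda\rangle$; vectors $(c_0,\dots,c_{n-1})\in\mathbb{F}_q^n$ are identified with $c_0+c_1x+\dots+c_{n-1}x^{n-1}\in\mathcal{R}$, and a $\lambda$-constacyclic code of length $n$ is an ideal of $\mathcal{R}$. Let $\zeta$ be a primitive $tn$-th root of unity in an extension $\mathbb{F}_{q^m}$ with $\zeta^n=\lambda$, so $x^n-\lambda=\prod_{i=0}^{n-1}(x-\zeta^{1+ti})$. The set $\mathcal{S}=\{1+ti:0\le i\le n-1\}$ (residues mod $tn$) is partitioned into the distinct $q$-cyclotomic cosets modulo $tn$, $C_{1+t\alpha_j}=\{(1+t\alpha_j)q^{h}\bmod tn: h\ge 0\}$, $j=0,\dots,s$, with $0=\alpha_0<\alpha_1<\dots<\alpha_s\le n-1$ and $d_j=|C_{1+t\alpha_j}|$. Let $m_j(x)=\prod_{h\in C_{1+t\alpha_j}}(x-\zeta^{h})$ (irreducible over $\mathbb{F}_q$), and let $\mathcal{I}_j$ be the ideal of $\mathcal{R}$ generated by $(x^n-\lambda)/m_j(x)$; this is an irreducible $\lambda$-constacyclic code of dimension $d_j$, said to correspond to the coset $C_{1+t\alpha_j}$, and $\mathcal{R}=\mathcal{I}_0\oplus\dots\oplus\mathcal{I}_s$. The cyclic shift $\rho:\mathcal{R}\to\mathcal{R}$ is $\rho(c(x))=xc(x)$,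 i.e. $(c_0,\dots,c_{n-1})\mapsto(\lambda c_{n-1},c_0,\dots,c_{n-2})$; $\langle\rho\rangle$ is the cyclic group it generates, of order $tn$. $\mathcal{C}^{*}=\mathcal{C}\setminus\{0\}$, and for a group $G$ acting on a finite set $X$, $N_G(X)$ denotes the number of $G$-orbits on $X$. *)

(* Defs.v *)
From HB Require Import structures.
From mathcomp Require Import all_boot all_order all_algebra all_field.
Set Implicit Arguments.
Unset Strict Implicit.
Unset Printing Implicit Defensive.
Import GRing.Theory.

(* y lies in the q-cyclotomic coset of x modulo N: y = x q^h mod N for some
   h >= 0.  Since q^h mod N is periodic with period <= N, h < N suffices. *)
Definition coset_rel (N q x y : nat) : bool :=
  [exists h : 'I_N, (x * q ^ h) %% N == y %% N].

Definition qcoset (N q x : nat) : {set 'I_N} :=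
  [set y : 'I_N | coset_rel N q x y].

(* i (0 <= i < n) is the index alpha of a coset C_{1+t alpha} of S:
   1 + t i is the least element of S in its coset. *)
Definition leader (q t n i : nat) : bool :=
  [forall i' : 'I_n, (i' < i) ==> ~~ coset_rel (t * n) q (1 + t * i) (1 + t * i')].

(* [:: alpha_0; alpha_1; ...; alpha_s], increasing, alpha_0 = 0 *)
Definition reps (q t n : nat) : seq nat := [seq i <- iota 0 n | leader q t n i].

Definition alpha (q t n j : nat) : nat := nth 0 (reps q t n) j.

Definition dcos (q t n j : nat) : nat := #|qcoset (t * n) q (1 + t * alpha q t n j)|.

Local Open Scope ring_scope.

Definition rho (F : fieldType) (n : nat) (lam : F) (c : 'rV[F]_n) : 'rV[F]_n :=
  poly_rV (('X * rVpoly c) %% ('X^n - lam%:P)).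

Definition ideal_gen (F : finFieldType) (n : nat) (lam : F) (g : {poly F})
  : {set 'rV[F]_n} :=
  [set c | [exists a : 'rV[F]_n, rVpoly c == (rVpoly a * g) %% ('X^n - lam%:P)]].

Definition Icode (F : finFieldType) (n : nat) (lam : F) (m : nat -> {poly F}) (j : nat)
  : {set 'rV[F]_n} :=
  ideal_gen n lam (('X^n - lam%:P) %/ m j).

Definition dsum_code (F : finFieldType) (n : nat) (lam : F) (m : nat -> {poly F})
  (beta : seq nat) : {set 'rV[F]_n} :=
  [set c | [exists f : {ffun 'I_(size beta) -> 'rV[F]_n},
     [forall i, f i \in Icode n lam m (nth 0%N beta i)] && (c == \sum_i f i)]].

Definition wt (F : fieldType) (n : nat) (c : 'rV[F]_n) : nat := #|[set i : 'I_n | c 0 i != 0]|.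

Definition n_orbits (F : finFieldType) (n : nat) (lam : F) (X : {set 'rV[F]_n}) : nat :=
  #|[set [set y | fconnect (rho lam) x y] | x in X]|.

Definition n_weights (F : finFieldType) (n : nat) (X : {set 'rV[F]_n}) : nat :=
  size (undup [seq wt c | c <- enum X]).

(* Main.v *)
Require Import Defs.
From HB Require Import structures.
From mathcomp Require Import all_boot all_order all_algebra all_field.
From mathcomp Require Import zify.
Import GRing.Theory.
Set Implicit Arguments.
Unset Strict Implicit.
Lemma count_mult_lt (o N : nat) : (o %| N)%N -> (\sum_(k < N) (o %| k) = N %/ o)%N.
Proof.
move=> oN; rewrite divn_count_dvd.
case: N oN => [|N] oN; first by rewrite big_ord0 big_geq.
rewrite big_add1 /= big_nat_recr //= oN.
rewrite -(big_mkord xpredT (fun k => (o %| k : nat))).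
rewrite big_nat_recl //= dvdn0.
by rewrite addnC.
Qed.

Lemma iter_eq_order (T : finType) (f : T -> T) x k :
  injective f -> (iter k f x == x) = (fingraph.order f x %| k)%N.
Proof.
move=> inj; set o := fingraph.order f x.
have io := iter_order inj x.
have Hm : forall d, iter (d * o) f x = x.
  by elim=> [|d IH] //=; rewrite mulSn iterD IH io.
rewrite {1}(divn_eq k o) addnC iterD Hm /dvdn.
have hlt : k %% o < o by rewrite ltn_mod order_gt0.
apply/eqP/eqP => [E|->] //.
by have := findex_iter hlt; rewrite E findex0.
Qed.

Lemma burnside (T : finType) (f : T -> T) (N : nat) (X : {set T}) :
  0 < N -> (forall x, iter N f x = x) -> (forall x, x \in X -> f x \in X) ->
  #|[set [set y | fconnect f x y] | x in X]| * N =
  \sum_(k < N) #|[set x in X | iter k f x == x]|.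
Proof.
move=> N0 fN fX.
have inj : injective f.
  move=> x y E; rewrite -(fN x) -(fN y).
  by case: N N0 fN {fX} => // N _ _; rewrite !iterSr E.
set orb := fun x => [set y | fconnect f x y].
have card_orb x : #|orb x| = fingraph.order f x.
  rewrite /orb -size_orbit -(card_uniqP (orbit_uniq f x)).
  by apply: eq_card => y; rewrite inE fconnect_orbit.
have oN x : fingraph.order f x %| N by rewrite -iter_eq_order // fN.
have -> : \sum_(k < N) #|[set x in X | iter k f x == x]| =
          \sum_(x in X) N %/ fingraph.order f x.
  transitivity (\sum_(k < N) \sum_(x in X) (iter k f x == x : nat)).
    apply: eq_bigr => k _; rewrite -sum1dep_card.
    rewrite (eq_bigl (fun x => (x \in X) && (iter k f x == x))); last first.
      by [].
    rewrite big_mkcondr /=; apply: eq_bigr => x _.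
    by case: (iter k f x == x).
  rewrite exchange_big /=; apply: eq_bigr => x _.
  rewrite -count_mult_lt //; apply: eq_bigr => k _.
  by rewrite iter_eq_order.
rewrite (partition_big_imset orb) /= -sum_nat_const.
apply: eq_bigr => O /imsetP [x0 Hx0 ->].
have E : forall x, (x \in X) && (orb x == orb x0) = (x \in orb x0).
  move=> x; apply/idP/idP.
    case/andP=> _ /eqP E; have : x \in orb x by rewrite inE connect0.
    by rewrite E.
  move=> Hx; have Hc : fconnect f x0 x by rewrite inE in Hx.
  apply/andP; split.
    case/connectP: Hc => p. 
    elim: p x0 Hx0 {Hx} => [|y p IH] x0 Hx0 /=; first by move=> _ ->.
    by case/andP=> /eqP <- Hp; apply: IH; [apply: fX|].
  apply/eqP/setP=> z; rewrite !inE; apply/idP/idP => Hz.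
    exact: connect_trans Hc Hz.
  by rewrite fconnect_sym // in Hc; exact: connect_trans Hc Hz.
rewrite (eq_bigl (fun x => x \in orb x0)) //.
have -> : \sum_(x in orb x0) N %/ fingraph.order f x =
          \sum_(x in orb x0) N %/ fingraph.order f x0.
  apply: eq_bigr => x Hx; rewrite -!card_orb.
  rewrite inE in Hx.
  suff -> : orb x = orb x0 by [].
  apply/setP=> z; rewrite !inE; apply/idP/idP => Hz.
    exact: connect_trans Hx Hz.
  by rewrite fconnect_sym // in Hx; exact: connect_trans Hx Hz.
by rewrite sum_nat_const card_orb mulnC divnK.
Qed.



Lemma uniq_map_inj_in (T1 T2 : eqType) (h : T1 -> T2) (s : seq T1) :
  uniq (map h s) -> {in s &, injective h}.
Proof.
elim: s => [|a s IH] //= /andP [ha us] x y.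
rewrite !inE => /orP [/eqP->|xs] /orP [/eqP->|ys] E //.
- by move: ha; rewrite E map_f.
- by move: ha; rewrite -E map_f.
- exact: IH.
Qed.

Lemma weights_orbits (T : finType) (f : T -> T) (w : T -> nat) (X : {set T}) :
  injective f -> (forall x, w (f x) = w x) ->
  (size (undup [seq w c | c <- enum X]) <= #|[set [set y | fconnect f x y] | x in X]|)%N /\
  (size (undup [seq w c | c <- enum X]) = #|[set [set y | fconnect f x y] | x in X]| <->
    (forall c1 c2, c1 \in X -> c2 \in X -> w c1 = w c2 -> exists j, iter j f c1 = c2)).
Proof.
move=> inj wf.
set orb := fun x => [set y | fconnect f x y].
set O := [set orb x | x in X].
have wit : forall x j, w (iter j f x) = w x.
  by move=> x; elim=> //= j IH; rewrite wf.
have wc : forall x y, fconnect f x y -> w y = w x.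
  by move=> x y /iter_findex <-; rewrite wit.
pose h (Z : {set T}) := if [pick y in Z] is Some y then w y else 0%N.
have hO : forall x, h (orb x) = w x.
  move=> x; rewrite /h; case: pickP => [y|].
    by rewrite inE => /wc.
  by move/(_ x); rewrite inE connect0.
have E : undup [seq w c | c <- enum X] =i undup [seq h Z | Z <- enum O].
  move=> k; rewrite !mem_undup; apply/mapP/mapP => [[x Hx ->]|[Z HZ ->]].
    by exists (orb x); rewrite ?hO // mem_enum; apply: imset_f; rewrite -mem_enum.
  rewrite mem_enum in HZ; case/imsetP: HZ => x Hx ->.
  by exists x; rewrite ?hO // mem_enum.
have Hs : size (undup [seq w c | c <- enum X]) = size (undup [seq h Z | Z <- enum O]).
  by apply: perm_size; apply: uniq_perm; rewrite ?undup_uniq.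
rewrite Hs.
have cardO : #|O| = size [seq h Z | Z <- enum O] by rewrite size_map cardE.
split; first by rewrite cardO size_undup.
have orbE : forall x y, fconnect f x y -> orb x = orb y.
  move=> x y Hxy; apply/setP=> z; rewrite !inE; apply/idP/idP => Hz.
    by rewrite fconnect_sym // in Hxy; exact: connect_trans Hxy Hz.
  exact: connect_trans Hxy Hz.
rewrite cardO; split.
  move=> Heq c1 c2 H1 H2 Hw.
  have U : uniq [seq h Z | Z <- enum O].
    by apply/negPn; rewrite -ltn_size_undup Heq ltnn.
  have := uniq_map_inj_in U.
  move/(_ (orb c1) (orb c2)); rewrite !mem_enum !imset_f // !hO => /(_ isT isT Hw) E12.
  have : c2 \in orb c1 by rewrite E12 inE connect0.
  by rewrite inE => /iter_findex Hi; exists (findex f c1 c2).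
move=> Hr; congr size; apply: undup_id.
rewrite map_inj_in_uniq ?enum_uniq //.
move=> S1 S2; rewrite !mem_enum => /imsetP [x1 H1 ->] /imsetP [x2 H2 ->].
rewrite !hO => Hw; case: (Hr _ _ H1 H2 Hw) => j <-.
by apply: orbE; exact: fconnect_iter.
Qed.

Local Open Scope ring_scope.

Section Main.
Variables (F : finFieldType) (n t : nat) (lam : F)
  (L : finFieldType) (iota : {rmorphism F -> L}) (zeta : L)
  (m : nat -> {poly F}).
Hypotheses (n0 : (0 < n)%N) (copn : coprime n #|F|)
  (lamP : t.-primitive_root lam) (zP : (t * n).-primitive_root zeta)
  (zn : zeta ^+ n = iota lam).

Local Notation q := #|F|.
Local Notation N := (t * n)%N.
Local Notation P := ('X^n - lam%:P : {poly F}).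
Local Notation Pm := ('X^n - (iota lam)%:P : {poly L}).

Lemma t0 : (0 < t)%N. Proof. exact: prim_order_gt0 lamP. Qed.
Lemma N0 : (0 < N)%N. Proof. by rewrite muln_gt0 t0 n0. Qed.
Lemma lam0 : lam != 0.
Proof.
apply/eqP=> l0; have := prim_expr_order lamP; rewrite l0 expr0n.
by rewrite eqn0Ngt t0 /= => /eqP; rewrite eq_sym oner_eq0.
Qed.
Lemma lamt : lam ^+ t = 1. Proof. exact: prim_expr_order lamP. Qed.
Lemma zN : zeta ^+ N = 1. Proof. exact: prim_expr_order zP. Qed.

Lemma mapPm : map_poly iota P = Pm.
Proof. by rewrite rmorphB /= map_polyXn map_polyC. Qed.

Lemma sizeP : size P = n.+1. Proof. exact: size_XnsubC. Qed.
Lemma P0 : P != 0. Proof. by rewrite -size_poly_eq0 sizeP. Qed.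

Definition Sset := [set h : 'I_N | (zeta ^+ h) ^+ n == iota lam].

Lemma rootPm (h : 'I_N) : h \in Sset -> Pm.[zeta ^+ h] = 0.
Proof. by rewrite inE hornerD hornerN hornerXn hornerC => /eqP ->; rewrite subrr. Qed.

Definition ev (h : nat) (c : 'rV[F]_n) : L := (map_poly iota (rVpoly c)).[zeta ^+ h].

Lemma ev_add h c1 c2 : ev h (c1 + c2) = ev h c1 + ev h c2.
Proof. by rewrite /ev linearD /= rmorphD hornerD. Qed.
Lemma ev0 h : ev h 0 = 0.
Proof. by rewrite /ev linear0 rmorph0 horner0. Qed.
Lemma ev_opp h c : ev h (- c) = - ev h c.
Proof. by rewrite /ev linearN /= rmorphN hornerN. Qed.
Lemma ev_sum h I (r : seq I) (Pr : pred I) (f : I -> 'rV[F]_n) :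
  ev h (\sum_(i <- r | Pr i) f i) = \sum_(i <- r | Pr i) ev h (f i).
Proof. exact: (big_morph _ (ev_add h) (ev0 h)). Qed.

Lemma map_mod_eval (p : {poly F}) (h : 'I_N) : h \in Sset ->
  (map_poly iota (p %% P)).[zeta ^+ h] = (map_poly iota p).[zeta ^+ h].
Proof.
move=> hS; rewrite {2}(divp_eq p P) rmorphD rmorphM /= mapPm hornerD hornerM.
by rewrite rootPm // mulr0 add0r.
Qed.


Lemma size_mod_le (p : {poly F}) : (size (p %% P)%R <= n)%N.
Proof. by have := ltn_modpN0 p P0; rewrite sizeP ltnS. Qed.

Lemma rVpoly_small (c : 'rV[F]_n) : rVpoly c %% P = rVpoly c.
Proof. by rewrite modp_small // sizeP ltnS size_poly. Qed.

Lemma rVpoly_rho (c : 'rV[F]_n) : rVpoly (rho lam c) = ('X * rVpoly c) %% P.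
Proof. by rewrite /rho poly_rV_K // size_mod_le. Qed.

Lemma rVpoly_iter k (c : 'rV[F]_n) : rVpoly (iter k (rho lam) c) = ('X^k * rVpoly c) %% P.
Proof.
elim: k => [|k IH] /=; first by rewrite expr0 mul1r rVpoly_small.
by rewrite rVpoly_rho IH modp_mul mulrA -exprS.
Qed.

Lemma ev_iter k (c : 'rV[F]_n) (h : 'I_N) : h \in Sset ->
  ev h (iter k (rho lam) c) = (zeta ^+ h) ^+ k * ev h c.
Proof.
move=> hS; rewrite /ev rVpoly_iter map_mod_eval // rmorphM /= map_polyXn.
by rewrite hornerM hornerXn.
Qed.

Lemma cardS : (n <= #|Sset|)%N.
Proof.
pose g (i : 'I_n) : 'I_N := Ordinal (ltn_pmod (1 + t * i) N0).
have gi : injective g.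
  move=> i j /(congr1 val) /= /eqP E; apply/val_inj/eqP => /=.
  wlog ij : i j E / (i <= j)%N.
    by move=> W; case: (leqP i j) => [|/ltnW] ?; [|rewrite eq_sym]; apply: W; rewrite // eq_sym.
  move: E; rewrite eq_sym eqn_mod_dvd ?leq_add2l ?leq_mul2l ?ij ?orbT //.
  rewrite subnDl -mulnBr dvdn_pmul2l ?t0 // => D.
  have jn := ltn_ord j.
  case E: (j - i)%N D => [|k] D; first by rewrite eqn_leq ij /= -subn_eq0 E.
  have := dvdn_leq (ltn0Sn k) D; rewrite -E => H.
  by have := leq_trans H (leq_subr i j); rewrite leqNgt jn.
have sub : [set g i | i in 'I_n] \subset Sset.
  apply/subsetP=> h /imsetP [i _ ->]; rewrite inE /= expr_mod ?zN //.
  rewrite -exprM mulnC exprM zn -rmorphXn /= exprD expr1 exprM lamt.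
  by rewrite expr1n mulr1.
by have := subset_leq_card sub; rewrite card_imset // card_ord.
Qed.

Lemma zeta_inj (h h' : 'I_N) : zeta ^+ h = zeta ^+ h' -> h = h'.
Proof.
move/eqP; rewrite (eq_prim_root_expr zP) !modn_small // => /eqP E.
exact: val_inj.
Qed.

Lemma ev_inj (c c' : 'rV[F]_n) :
  (forall h : 'I_N, h \in Sset -> ev h c = ev h c') -> c = c'.
Proof.
move=> E; apply: (can_inj rVpolyK); apply/eqP; rewrite -subr_eq0; apply/eqP.
set p := rVpoly c - rVpoly c'.
have sp : (size p <= n)%N.
  by rewrite /p; apply: leq_trans (size_polyD _ _) _; rewrite size_polyN geq_max !size_poly.
apply/eqP; rewrite -(map_poly_eq0 iota); apply/negP => /negP p0.
pose rs := [seq zeta ^+ (val h) | h <- enum Sset].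
have urs : uniq rs.
  rewrite map_inj_in_uniq ?enum_uniq // => h h' _ _; exact: zeta_inj.
have ars : all (root (map_poly iota p)) rs.
  apply/allP=> _ /mapP [h hS ->]; rewrite mem_enum in hS.
  rewrite /root /p rmorphB /= hornerD hornerN.
  by have := E h hS; rewrite /ev => ->; rewrite subrr.
have := max_poly_roots p0 ars urs.
rewrite size_map_poly size_map -cardE => H.
by have := leq_trans (leq_ltn_trans cardS H) sp; rewrite ltnn.
Qed.

Lemma rho_add (a b : 'rV[F]_n) : rho lam (a + b) = rho lam a + rho lam b.
Proof. by rewrite /rho linearD /= mulrDr modpD linearD. Qed.
Lemma rho0 : rho lam 0 = 0 :> 'rV[F]_n.
Proof. by rewrite /rho linear0 mulr0 mod0p linear0. Qed.
Lemma iter_add k (a b : 'rV[F]_n) :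
  iter k (rho lam) (a + b) = iter k (rho lam) a + iter k (rho lam) b.
Proof. by elim: k => //= k ->; rewrite rho_add. Qed.
Lemma iter0 k : iter k (rho lam) 0 = 0 :> 'rV[F]_n.
Proof. by elim: k => //= k ->; rewrite rho0. Qed.
Lemma iter_opp k (a : 'rV[F]_n) : iter k (rho lam) (- a) = - iter k (rho lam) a.
Proof.
apply/eqP; rewrite -subr_eq0 opprK -iter_add addrC subrr iter0 //.
Qed.
Lemma iter_sum k I (r : seq I) (Pr : pred I) (f : I -> 'rV[F]_n) :
  iter k (rho lam) (\sum_(i <- r | Pr i) f i) = \sum_(i <- r | Pr i) iter k (rho lam) (f i).
Proof. exact: (big_morph _ (iter_add k) (iter0 k)). Qed.

Lemma iterN (c : 'rV[F]_n) : iter N (rho lam) c = c.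
Proof.
apply: ev_inj => h hS; rewrite ev_iter // -exprM mulnC exprM zN expr1n mul1r //.
Qed.

Lemma rho_inj : injective (rho lam : 'rV[F]_n -> 'rV[F]_n).
Proof.
move=> x y E; rewrite -(iterN x) -(iterN y).
have : (0 < N)%N := N0; case: N => // k _; by rewrite !iterSr E.
Qed.

Lemma rho_poly (c : 'rV[F]_n) :
  rVpoly (rho lam c) = 'X * rVpoly c - ((rVpoly c)`_n.-1)%:P * P.
Proof.
set p := rVpoly c; set a := p`_n.-1.
rewrite rVpoly_rho -{1}(subrK (a%:P * P) ('X * p)) addrC modp_addl_mul_small //.
rewrite sizeP ltnS; apply/leq_sizeP => j jn.
rewrite coefB coefXM coefCM coefB coefXn coefC.
have pz : forall k, (n <= k)%N -> p`_k = 0.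
  by move=> k kn; apply: nth_default; apply: leq_trans (size_poly _ _) kn.
case: j jn => [|j] jn.
  by move: n0; rewrite ltnNge jn.
rewrite /= subr0 /=.
case: (ltngtP j.+1 n) jn => // [jn|jn] _.
  by rewrite pz // mulr0 subr0.
by rewrite mulr1 /a -jn subrr.
Qed.

Lemma rho_ordS (c : 'rV[F]_n) (i : 'I_n) :
  (rho lam c 0 (ordS i) != 0) = (c 0 i != 0).
Proof.
rewrite -coef_rVpoly_ord rho_poly coefB coefXM coefCM coefB coefXn coefC /=.
have il := ltn_ord i.
case: (ltngtP i.+1 n) il => // [iln|iln] _.
  by rewrite modn_small //= (ltn_eqF iln) subr0 mulr0 subr0 coef_rVpoly_ord.
have E1 : n.-1 = i by rewrite -(succnK i) iln.
rewrite iln modnn /= (ltn_eqF n0) sub0r sub0r mulrN opprK E1.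
by rewrite coef_rVpoly_ord mulf_eq0 negb_or lam0 andbT.
Qed.

Lemma wt_rho (c : 'rV[F]_n) : wt (rho lam c) = wt c.
Proof.
rewrite /wt -(card_preimset _ (@ordS_inj n)); apply: eq_card => i.
by rewrite !inE rho_ordS.
Qed.

Lemma q0 : (0 < q)%N.
Proof. by apply/card_gt0P; exists 0. Qed.

Lemma tq : (t %| q.-1)%N.
Proof.
rewrite (prim_order_dvd lamP); apply/eqP; apply: (mulIf lam0).
by rewrite mul1r -exprSr prednK ?expf_card // q0.
Qed.

Lemma copqN : coprime q N.
Proof.
rewrite coprimeMr [coprime q n]coprime_sym copn andbT coprime_sym -coprime_modr.
rewrite -(prednK q0) -addn1 -modnDml (eqP tq) add0n coprime_modr.
exact: coprimen1.
Qed.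

Definition e (j : nat) := (1 + t * alpha q t n j)%N.
Definition Q (j : nat) := qcoset N q (e j).
Definition g (j : nat) := P %/ m j.

Lemma lam_pow k : lam ^+ (k * q) = lam ^+ k.
Proof. by rewrite mulnC exprM expf_card. Qed.

Lemma lam_e j a : lam ^+ (e j * q ^ a) = lam.
Proof.
elim: a => [|a IH]; last by rewrite expnSr mulnA lam_pow IH.
by rewrite expn0 muln1 /e exprD expr1 exprM lamt expr1n mulr1.
Qed.

Lemma inQ j (h : 'I_N) : reflect (exists a : 'I_N, (e j * q ^ a) %% N = h)%N (h \in Q j).
Proof.
rewrite /Q /qcoset inE /coset_rel (modn_small (ltn_ord h)).
by apply: (iffP existsP) => [[a /eqP]|[a E]]; exists a => //; apply/eqP.
Qed.

Lemma QS j : Q j \subset Sset.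
Proof.
apply/subsetP => h /inQ [a E]; rewrite inE -E expr_mod ?zN // -exprM mulnC.
by rewrite exprM zn -rmorphXn /= lam_e.
Qed.

Lemma copq_pow a : coprime N (q ^ a).
Proof. by rewrite coprime_sym coprimeXl // copqN. Qed.

Lemma zeta_hk j (h : 'I_N) k : h \in Q j -> ((zeta ^+ h) ^+ k == 1) = (N %| e j * k)%N.
Proof.
case/inQ => a E; rewrite -exprM -(prim_order_dvd zP) -E {1}/dvdn modnMml -/(dvdn _ _).
have -> : (e j * q ^ a * k = q ^ a * (e j * k))%N by rewrite mulnAC mulnC.
exact: Gauss_dvdr _ (copq_pow a).
Qed.

Local Notation R := (size (reps q t n)).
Hypothesis mP : forall j, (j < R)%N ->
  map_poly iota (m j) = \prod_(h in Q j) ('X - (zeta ^+ h)%:P).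

Lemma prodQ j : \prod_(h in Q j) ('X - (zeta ^+ h)%:P) =
  \prod_(z <- [seq zeta ^+ (val h) | h <- enum (Q j)]) ('X - z%:P).
Proof. by rewrite big_map big_enum. Qed.

Lemma m_dvd j : (j < R)%N -> m j %| P.
Proof.
move=> jR; rewrite -(dvdp_map iota) mP // mapPm prodQ; apply: uniq_roots_dvdp.
  apply/allP => _ /mapP [h hQ ->]; rewrite mem_enum in hQ.
  by rewrite /root rootPm // (subsetP (QS j)).
rewrite uniq_rootsE map_inj_in_uniq ?enum_uniq // => h h' _ _; exact: zeta_inj.
Qed.

Lemma m_size j : (j < R)%N -> size (m j) = (#|Q j|).+1.
Proof.
by move=> jR; rewrite -(size_map_poly iota) mP // prodQ size_prod_XsubC size_map cardE.
Qed.

Lemma m0 j : (j < R)%N -> m j != 0.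
Proof. by move=> jR; rewrite -size_poly_eq0 m_size. Qed.

Lemma g_mul j : (j < R)%N -> g j * m j = P.
Proof. by move=> jR; rewrite divpK // m_dvd. Qed.

Lemma g0 j : (j < R)%N -> g j != 0.
Proof.
move=> jR; apply/eqP => E; have := g_mul jR; rewrite E mul0r => E'.
by move: P0; rewrite -E' eqxx.
Qed.

Lemma g_size j : (j < R)%N -> (size (g j) + #|Q j| = n.+1)%N.
Proof.
move=> jR; have := congr1 (fun p : {poly F} => size p) (g_mul jR); rewrite /= size_mul ?g0 ?m0 // m_size //.
by rewrite sizeP addnS /=.
Qed.

Lemma g_van j (h : 'I_N) : (j < R)%N -> h \in Sset -> h \notin Q j ->
  (map_poly iota (g j)).[zeta ^+ h] = 0.
Proof.
move=> jR hS hQ; have := congr1 (fun p => (map_poly iota p).[zeta ^+ h]) (g_mul jR).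
rewrite /= rmorphM /= hornerM mapPm rootPm // => /eqP; rewrite mulf_eq0 => /orP [/eqP //|].
rewrite mP // horner_prod => /prodf_eq0 [h' h'Q]; rewrite hornerXsubC subr_eq0 => /eqP E.
by move: hQ; rewrite (zeta_inj E) h'Q.
Qed.

Lemma g_dvdP j : (j < R)%N -> g j %| P.
Proof. by move=> jR; rewrite -(g_mul jR) dvdp_mulr. Qed.

Lemma memI j (c : 'rV[F]_n) : (j < R)%N ->
  (c \in Icode n lam m j) = (g j %| rVpoly c).
Proof.
move=> jR; rewrite /Icode /ideal_gen inE -/(g j); apply/existsP/idP.
  case=> a /eqP E; apply: (eq_ind _ (fun p => g j %| p) _ _ (esym E)).
  rewrite -dvdp_mod ?g_dvdP //; exact: dvdp_mull.
move=> D; exists (poly_rV (rVpoly c %/ g j)).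
rewrite poly_rV_K ?divpK ?rVpoly_small //.
rewrite size_divp ?g0 //; apply: leq_trans (leq_subr _ _) (size_poly _ _).
Qed.

Lemma I_van j (c : 'rV[F]_n) (h : 'I_N) : (j < R)%N -> c \in Icode n lam m j ->
  h \in Sset -> h \notin Q j -> ev h c = 0.
Proof.
move=> jR; rewrite memI // => /divpK E hS hQ.
by rewrite /ev -E rmorphM hornerM /= g_van // mulr0.
Qed.

Lemma I_add j (a b : 'rV[F]_n) : (j < R)%N -> a \in Icode n lam m j ->
  b \in Icode n lam m j -> a + b \in Icode n lam m j.
Proof. by move=> jR; rewrite !memI // linearD /=; exact: dvdp_add. Qed.

Lemma I_opp j (a : 'rV[F]_n) : (j < R)%N -> a \in Icode n lam m j ->
  - a \in Icode n lam m j.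
Proof. by move=> jR; rewrite !memI // linearN /= dvdpNr. Qed.

Lemma I_0 j : (j < R)%N -> (0 : 'rV[F]_n) \in Icode n lam m j.
Proof. by move=> jR; rewrite memI // linear0 dvdp0. Qed.

Lemma I_rho j (a : 'rV[F]_n) : (j < R)%N -> a \in Icode n lam m j ->
  rho lam a \in Icode n lam m j.
Proof.
move=> jR; rewrite !memI // rVpoly_rho -dvdp_mod ?g_dvdP //; exact: dvdp_mull.
Qed.

Lemma I_iter j k (a : 'rV[F]_n) : (j < R)%N -> a \in Icode n lam m j ->
  iter k (rho lam) a \in Icode n lam m j.
Proof. by move=> jR aI; elim: k => //= k IH; exact: I_rho. Qed.

Lemma I_z j (c : 'rV[F]_n) : (j < R)%N -> c \in Icode n lam m j ->
  (forall h : 'I_N, h \in Q j -> ev h c = 0) -> c = 0.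
Proof.
move=> jR cI H; apply: ev_inj => h hS; rewrite ev0.
by case: (boolP (h \in Q j)) => hQ; [exact: H | exact: I_van cI hS hQ].
Qed.

Lemma I_card j : (j < R)%N -> #|Icode n lam m j| = (q ^ #|Q j|)%N.
Proof.
move=> jR; set d := #|Q j|.
pose phi (a : 'rV[F]_d) : 'rV[F]_n := poly_rV (rVpoly a * g j).
have szg := g_size jR.
have sz (a : 'rV[F]_d) : (size (rVpoly a * g j)%R <= n)%N.
  apply: leq_trans (size_polyMleq _ _) _.
  have H : (size (rVpoly a) <= d)%N by exact: size_poly.
  move: H szg; rewrite -/d; move: (size (rVpoly a)) (size (g j)) => x y; lia.
have -> : Icode n lam m j = [set phi a | a in 'rV[F]_d].
  apply/setP => c; apply/idP/imsetP => [cI|[a _ ->]].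
    move: (cI); rewrite memI // => D.
    exists (poly_rV (rVpoly c %/ g j)) => //.
    rewrite /phi poly_rV_K ?divpK ?rVpolyK //.
    rewrite size_divp ?g0 //; have H : (size (rVpoly c) <= n)%N by exact: size_poly.
    move: H szg; rewrite -/d; move: (size (rVpoly c)) (size (g j)) => x y; lia.
  by rewrite memI // /phi poly_rV_K // dvdp_mull.
rewrite card_imset; first by rewrite card_mx mul1n.
move=> a b /(congr1 (@rVpoly _ _)); rewrite /phi !poly_rV_K // => /mulIf.
by move/(_ (g0 jR)) => /(can_inj rVpolyK).
Qed.

Local Notation T := (totient N).

Lemma T0 : (0 < T)%N. Proof. by rewrite totient_gt0 N0. Qed.
Lemma TN : (T <= N)%N.
Proof.
rewrite totient_count_coprime.
have : (\sum_(0 <= d < N) coprime N d <= \sum_(0 <= d < N) 1)%N.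
  by apply: leq_sum => i _; exact: leq_b1.
by rewrite sum_nat_const_nat subn0 muln1.
Qed.

Lemma qT : (q ^ T = 1 %[mod N])%N.
Proof. by apply: cyclic.Euler_exp_totient; exact: copqN. Qed.

Lemma qTk k : (q ^ (T * k) = 1 %[mod N])%N.
Proof. by rewrite expnM -modnXm qT modnXm exp1n. Qed.

Lemma pow_modT k : (q ^ k = q ^ (k %% T) %[mod N])%N.
Proof.
rewrite {1}(divn_eq k T) expnD (mulnC (k %/ T)%N) -modnMml qTk modnMml mul1n //.
Qed.

Lemma coset_back x y a b : (x * q ^ a = y * q ^ b %[mod N])%N ->
  exists c : 'I_N, (y * q ^ c = x %[mod N])%N.
Proof.
move=> E.
have c_lt : ((b + a * T.-1) %% T < N)%N by apply: leq_trans (ltn_pmod _ T0) TN.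
exists (Ordinal c_lt) => /=.
rewrite -modnMmr -pow_modT modnMmr expnD mulnA -modnMml -E modnMml.
rewrite -mulnA -expnD -{1}(muln1 a) -mulnDr add1n prednK ?T0 // (mulnC a) -modnMmr (qTk a) modnMmr muln1 //.
Qed.

Lemma alpha_in j : (j < R)%N -> leader q t n (alpha q t n j) && (alpha q t n j \in seq.iota 0 n).
Proof. by move=> jR; rewrite -mem_filter; exact: mem_nth. Qed.

Lemma alpha_lt j : (j < R)%N -> (alpha q t n j < n)%N.
Proof. by move/alpha_in => /andP [_]; rewrite mem_iota. Qed.

Lemma reps_sorted : sorted ltn (reps q t n).
Proof. apply: sorted_filter; [exact: ltn_trans | exact: iota_ltn_sorted]. Qed.

Lemma alpha_mono j j' : (j < R)%N -> (j' < R)%N -> (j < j')%N ->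
  (alpha q t n j < alpha q t n j')%N.
Proof. move=> jR j'R jj; exact: (sorted_ltn_nth ltn_trans 0 reps_sorted). Qed.

Lemma Q_disj j j' (h : 'I_N) : (j < R)%N -> (j' < R)%N -> j != j' ->
  h \in Q j -> h \in Q j' -> False.
Proof.
wlog jj : j j' / (j < j')%N.
  move=> W jR j'R ne hj hj'; have [jj|jj|E] := ltngtP j j'.
  - exact: (W j j').
  - by apply: (W j' j) => //; rewrite eq_sym.
  - by move: ne; rewrite E eqxx.
move=> jR j'R _ /inQ [a Ea] /inQ [b Eb].
have E : (e j * q ^ a = e j' * q ^ b %[mod N])%N by rewrite Ea Eb.
case: (coset_back E) => c Ec.
have := alpha_in j'R; case/andP => /forallP /(_ (Ordinal (alpha_lt jR))) /=.
rewrite alpha_mono //= => /negP H _; apply: H; apply/existsP; exists c; exact/eqP.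
Qed.

Lemma fix_I j k : (j < R)%N ->
  [set c in Icode n lam m j | iter k (rho lam) c == c] =
  if (N %| e j * k)%N then Icode n lam m j else [set 0].
Proof.
move=> jR; apply/setP => c; rewrite inE; case: ifP => D.
  apply: andb_idr => cI; apply/eqP; apply: ev_inj => h hS; rewrite ev_iter //.
  case: (boolP (h \in Q j)) => hQ.
    by move: D; rewrite -(zeta_hk _ hQ) => /eqP ->; rewrite mul1r.
  by rewrite (I_van jR cI hS hQ) mulr0.
rewrite in_set1; apply/idP/eqP => [/andP [cI /eqP Hc]|->]; last by rewrite I_0 // iter0 eqxx.
apply: (I_z jR cI) => h hQ.
have hS : h \in Sset by apply: (subsetP (QS j)).
have := ev_iter k c hS; rewrite Hc => /eqP; rewrite -subr_eq0 -{1}(mul1r (ev h c)).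
rewrite -mulrBl mulf_eq0 subr_eq0 eq_sym (zeta_hk k hQ) D /= => /eqP //.
Qed.

Lemma card_fix_I j k : (j < R)%N ->
  #|[set c in Icode n lam m j | iter k (rho lam) c == c]| =
  if (N %| e j * k)%N then (q ^ #|Q j|)%N else 1%N.
Proof. by move=> jR; rewrite fix_I //; case: ifP => _; rewrite ?I_card ?cards1. Qed.

Lemma count_gcd (g : nat) : (\sum_(k < N) (N %| g * k : nat) = gcdn g N)%N.
Proof.
set d := gcdn g N.
have d0 : (0 < d)%N by rewrite gcdn_gt0 N0 orbT.
have dN : (d %| N)%N by exact: dvdn_gcdr.
have [N' EN] : exists N', N = (N' * d)%N by exists (N %/ d)%N; rewrite divnK.
have E : forall k, (N %| g * k)%N = (N' %| k)%N.
  move=> k; rewrite -[(N' %| k)%N](dvdn_pmul2r d0) -EN.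
  apply/idP/idP => H.
    have H2 : (N %| gcdn (g * k) (N * k))%N by rewrite dvdn_gcd H dvdn_mulr.
    by move: H2; rewrite -muln_gcdl (mulnC _ k).
  apply: dvdn_trans H _; rewrite (mulnC g); exact: dvdn_mul (dvdnn k) (dvdn_gcdl g N).
rewrite (eq_bigr (fun k : 'I_N => (N' %| k : nat))); last by move=> k _; rewrite E.
rewrite count_mult_lt; last by rewrite EN dvdn_mulr.
by rewrite EN mulKn // lt0n; apply/eqP => N'0; move: N0; rewrite EN N'0.
Qed.

Variable beta : seq nat.
Hypotheses (bs : sorted ltn beta) (bR : all (fun b => b < R)%N beta).
Local Notation u := (size beta).
Local Notation b i := (nth 0%N beta i).

Lemma bR' (i : 'I_u) : (b i < R)%N.
Proof. by apply: (allP bR); apply: mem_nth. Qed.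

Lemma b_inj (i i' : 'I_u) : b i = b i' -> i = i'.
Proof.
move=> E; apply: val_inj; apply/eqP; rewrite -(nth_uniq 0%N (ltn_ord i) (ltn_ord i')).
  by rewrite E.
by apply: (sorted_uniq ltn_trans ltnn).
Qed.

Lemma direct (f : 'I_u -> 'rV[F]_n) :
  (forall i, f i \in Icode n lam m (b i)) -> \sum_i f i = 0 -> forall i, f i = 0.
Proof.
move=> fI S0 i; apply: (I_z (bR' i) (fI i)) => h hQ.
have hS : h \in Sset by exact: (subsetP (QS _) _ hQ).
have := congr1 (ev h) S0; rewrite ev0 ev_sum (bigD1 i) //= big1 ?addr0 // => i' ne.
apply: (I_van (bR' i') (fI i') hS); apply/negP => hQ'.
apply: (Q_disj (bR' i) (bR' i')) hQ hQ'.
by apply/negP => /eqP /b_inj E; move: ne; rewrite E eqxx.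
Qed.

Lemma card_fam (I T : finType) (A : I -> {set T}) :
  #|[set f : {ffun I -> T} | [forall i, f i \in A i]]| = \prod_(i : I) #|A i|.
Proof.
rewrite (eq_card (B := family (fun i => mem (A i)))); last first.
  move=> f; rewrite inE; apply/forallP/familyP => H i; exact: H.
by rewrite card_family foldrE big_map big_enum.
Qed.

Lemma fixC k : #|[set c in dsum_code n lam m beta | iter k (rho lam) c == c]| =
  (\prod_(i < u) #|[set c in Icode n lam m (b i) | iter k (rho lam) c == c]|)%N.
Proof.
set A := fun i : 'I_u => [set c in Icode n lam m (b i) | iter k (rho lam) c == c].
rewrite -(card_fam A).
have sub_in : forall (f f' : 'I_u -> 'rV[F]_n), (forall i, f i \in Icode n lam m (b i)) ->
    (forall i, f' i \in Icode n lam m (b i)) -> \sum_i f i = \sum_i f' i -> forall i, f i = f' i.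
  move=> f f' fI f'I E i; apply/eqP; rewrite -subr_eq0; apply/eqP.
  apply: (direct (f := fun i => f i - f' i)).
    by move=> i'; apply: I_add (bR' _) (fI i') (I_opp (bR' _) (f'I i')).
  by rewrite sumrB E subrr.
set Fam := [set f : {ffun 'I_u -> 'rV[F]_n} | [forall i, f i \in A i]].
have FamI : forall f, f \in Fam -> forall i, f i \in Icode n lam m (b i).
  by move=> f; rewrite inE => /forallP H i; move: (H i); rewrite inE => /andP [].
have -> : [set c in dsum_code n lam m beta | iter k (rho lam) c == c] =
          (fun f : {ffun 'I_u -> 'rV[F]_n} => \sum_i f i) @: Fam.
  apply/setP => c; rewrite inE; apply/andP/imsetP.
    case; rewrite inE => /existsP [f /andP [/forallP fI /eqP ->]] /eqP Hfix.
    exists f => //; rewrite inE; apply/forallP => i; rewrite inE fI /=.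
    apply/eqP; apply: (sub_in (fun i => iter k (rho lam) (f i)) f) => //.
      by move=> i'; apply: I_iter (bR' _) (fI i').
    by rewrite -iter_sum.
  case=> f fF ->; split.
    by rewrite inE; apply/existsP; exists f; rewrite eqxx andbT; apply/forallP; exact: FamI.
  rewrite iter_sum; apply/eqP; apply: eq_bigr => i _.
  by move: fF; rewrite inE => /forallP /(_ i); rewrite inE => /andP [_ /eqP].
rewrite card_in_imset // => f f' fF f'F E; apply/ffunP => i.
exact: (sub_in f f' (FamI f fF) (FamI f' f'F) E).
Qed.

Local Notation C := (dsum_code n lam m beta).
Local Notation D i := (q ^ #|Q (b i)|)%N.
Definition x (i : 'I_u) k : nat := ((N %| e (b i) * k : nat) * (D i - 1))%N.
Definition gJ (J : {set 'I_u}) : nat := \big[gcdn/0%N]_(i in J) e (b i).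

Lemma fixC_x k : #|[set c in C | iter k (rho lam) c == c]| = (\prod_(i < u) (x i k + 1))%N.
Proof.
rewrite fixC; apply: eq_bigr => i _; rewrite card_fix_I ?bR' // /x.
by case: ifP => _; rewrite ?mul1n ?mul0n ?subnK // expn_gt0 q0.
Qed.

Lemma prod_expand k : (\prod_(i < u) (x i k + 1) =
  \sum_(J : {set 'I_u}) \prod_(i in J) x i k)%N.
Proof.
rewrite (bigA_distr 1%N addn); apply: eq_bigr => J _; rewrite [RHS]big_mkcond.
by apply: eq_bigr => i _; case: (i \in J).
Qed.

Lemma prodx k (J : {set 'I_u}) : (\prod_(i in J) x i k =
  (N %| gJ J * k : nat) * \prod_(i in J) (D i - 1))%N.
Proof.
rewrite big_split /=; congr (_ * _)%N.
have -> : (gJ J * k = \big[gcdn/0%N]_(i in J) (e (b i) * k))%N.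
  rewrite /gJ; apply: (big_morph (fun y => y * k)%N (fun a c => muln_gcdl a c k) (mul0n k)).
case: (boolP (N %| \big[gcdn/0%N]_(i in J) (e (b i) * k))%N) => H.
  by rewrite big1 // => i iJ; move/dvdn_biggcdP: H => /(_ i iJ) ->.
have [i iJ ni] : exists2 i, i \in J & ~~ (N %| e (b i) * k)%N.
  apply/exists_inP; apply: contraR H => /exists_inPn H; apply/dvdn_biggcdP => i iJ.
  by move: (H i iJ); rewrite negbK.
by rewrite (bigD1 i) //= (negbTE ni).
Qed.

Lemma cop_e j : coprime (e j) t.
Proof.
rewrite coprime_sym -coprime_modr /e addnC (mulnC t) modnMDl coprime_modr.
exact: coprimen1.
Qed.

Lemma sumJ (J : {set 'I_u}) : J != set0 -> (\sum_(k < N) (N %| gJ J * k : nat) = gcdn (gJ J) n)%N.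
Proof.
move=> J0; rewrite count_gcd (mulnC t n) Gauss_gcdl //.
case/set0Pn: J0 => i iJ; apply: coprime_dvdl (cop_e (b i)).
by apply: (biggcdn_inf i) => //.
Qed.

Lemma C0 : (0 : 'rV[F]_n) \in C.
Proof.
rewrite inE; apply/existsP; exists [ffun=> 0]; apply/andP; split.
  by apply/forallP => i; rewrite ffunE I_0 // bR'.
by rewrite big1 // => i _; rewrite ffunE.
Qed.

Lemma C_rho c : c \in C -> rho lam c \in C.
Proof.
rewrite !inE => /existsP [f /andP [/forallP fI /eqP ->]].
apply/existsP; exists [ffun i => rho lam (f i)]; apply/andP; split.
  by apply/forallP => i; rewrite ffunE; apply: I_rho (bR' i) (fI i).
apply/eqP; have := iter_sum 1 (index_enum 'I_u) xpredT f; rewrite /= => ->.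
by apply: eq_bigr => i _; rewrite ffunE.
Qed.

Lemma main_nat : (#|[set [set y | fconnect (rho lam) c y] | c in C :\ (0 : 'rV[F]_n)%R]| * N =
  \sum_(J : {set 'I_u} | J != set0) (\prod_(i in J) (D i - 1) * gcdn (gJ J) n))%N.
Proof.
rewrite (burnside N0 iterN); last first.
  move=> c; rewrite !in_setD1 => /andP [c0 cC]; rewrite C_rho // andbT.
  by apply: contra c0 => /eqP E; apply/eqP; apply: rho_inj; rewrite E rho0.
transitivity (\sum_(k < N) \sum_(J : {set 'I_u} | J != set0) \prod_(i in J) x i k)%N.
  apply: eq_bigr => k _.
  have -> : [set c in C :\ 0 | iter k (rho lam) c == c] =
            [set c in C | iter k (rho lam) c == c] :\ 0.
    by apply/setP => c; rewrite !inE andbA.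
  have := cardsD1 0 [set c in C | iter k (rho lam) c == c].
  rewrite inE C0 iter0 eqxx /= fixC_x prod_expand (bigD1 set0) //= big_set0 add1n.
  by move=> [->].
rewrite exchange_big /=; apply: eq_bigr => J J0.
rewrite (eq_bigr (fun k : 'I_N => (N %| gJ J * k : nat) * \prod_(i in J) (D i - 1)))%N.
  by rewrite -big_distrl /= sumJ // mulnC.
by move=> k _; rewrite prodx.
Qed.

End Main.

Theorem theorem1 (F : finFieldType) (n t : nat) (lam : F)
  (L : finFieldType) (iota : {rmorphism F -> L}) (zeta : L)
  (m : nat -> {poly F}) (beta : seq nat) :
  (0 < n)%N -> coprime n #|F| ->
  t.-primitive_root lam ->
  (t * n).-primitive_root zeta -> zeta ^+ n = iota lam ->
  (forall j, (j < size (reps #|F| t n))%N ->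
     map_poly iota (m j) =
     \prod_(h in qcoset (t * n) #|F| (1 + t * alpha #|F| t n j)) ('X - (zeta ^+ h)%:P)) ->
  sorted ltn beta -> all (fun b => b < size (reps #|F| t n))%N beta ->
  let C := dsum_code n lam m beta in
  let Cstar := C :\ 0 in
  ((n_orbits lam Cstar)%:R : rat) =
    \sum_(G : {set 'I_(size beta)} | G != set0)
      ((\prod_(i in G) (#|F| ^ dcos #|F| t n (nth 0%N beta i) - 1)%N
        * gcdn (\big[gcdn/0%N]_(i in G) (1 + t * alpha #|F| t n (nth 0%N beta i))) n)%N%:R
       / (t * n)%N%:R)
  /\ (n_weights Cstar <= n_orbits lam Cstar)%N
  /\ (n_weights Cstar = n_orbits lam Cstar <->
      (forall c1 c2, c1 \in Cstar -> c2 \in Cstar -> wt c1 = wt c2 ->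
         exists j : nat, iter j (rho lam) c1 = c2)).
Proof.
move=> n0 copn lamP zP zn mP bs bR C Cstar.
split.
  have H := main_nat n0 copn lamP zP zn mP bs bR.
  have N0' : ((t * n)%N%:R : rat) != 0 by rewrite Num.Theory.pnatr_eq0 -lt0n (N0 n0 lamP).
  rewrite -mulr_suml -natr_sum; apply: (mulIf N0'); rewrite mulfVK // -natrM.
  by rewrite /n_orbits H.
have [H1 H2] := weights_orbits (w := @wt F n) Cstar (rho_inj n0 lamP zP zn) (wt_rho n0 lamP).
by split.
Qed.
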